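(* Let $\varphi\in L^\infty(\mathbb{T})$, let $C$ be a conjugation on $H^2(\mathbb{D})$, and let $S=CM_zC$. If $T_\varphi$ is $C$-symmetric, then $T_\varphi$ is $S$-Toeplitz, i.e. $S^*T_\varphi S=T_\varphi$.
   Context: A conjugation is an anti-linear, involutive ($C^2=I$), isometric map; $T$ is $C$-symmetric if $CT^*C=T$. $H^2(\mathbb{D})$ is the Hardy space of the unit disc (as a closed subspace of $L^2(\mathbb{T})$), $M_z$ is multiplication by $z$ on it, and for $\varphi\in L^\infty(\mathbb{T})$, $T_\varphi f=P_{H^2(\mathbb{D})}(\varphi f)$. *)

(* Defs.v *)
From mathcomp Require Import all_boot all_algebra.
From mathcomp Require Import all_classical all_reals all_analysis.
From mathcomp Require Import complex.
Import GRing.Theory Num.Theory.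
Import numFieldNormedType.Exports.

Set Implicit Arguments.
Unset Strict Implicit.
Unset Printing Implicit Defensive.

Local Open Scope ring_scope.
Local Open Scope classical_set_scope.

Section Hardy.
Variable R : realType.

Definition re (z : R[i]) : R := complex.Re z.
Definition im (z : R[i]) : R := complex.Im z.

Definition cnormsq (z : R[i]) : R := re z ^+ 2 + im z ^+ 2.

Definition csum (u : nat -> R[i]) : R[i] :=
  Complex (limn (series (fun n => re (u n))))
          (limn (series (fun n => im (u n)))).

(* Model of H^2(D): a function f in H^2 is identified with the sequence
   (hat f(n))_{n >= 0} of its Fourier coefficients (the unitary Fourier
   isomorphism H^2 ~ l^2(N)). *)
Definition inH2 (f : nat -> R[i]) : Prop :=
  cvgn (series (fun n => cnormsq (f n) : R)).

Definition inner (f g : nat -> R[i]) : R[i] := csum (fun n => f n * (g n)^*).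

(* The unit circle T is parametrized by t in [0, 2pi]; normalized
   Lebesgue measure dt/(2 pi). *)
Definition circ : set R := `[0, 2 * pi]%classic.

Definition Linfty (phi : R -> R[i]) : Prop :=
  measurable_fun circ (fun t => re (phi t)) /\
  measurable_fun circ (fun t => im (phi t)) /\
  exists M : R, {ae (@lebesgue_measure R), forall t, circ t -> cnormsq (phi t) <= M}.

(* Fourier coefficient hat phi(n) = (1/2pi) int_0^{2pi} phi(t) e^{-int} dt *)
Definition fourier (phi : R -> R[i]) (n : int) : R[i] :=
  Complex
   ((2 * pi)^-1 * Rintegral (@lebesgue_measure R) circ
      (fun t => re (phi t) * cos (n%:~R * t)
              + im (phi t) * sin (n%:~R * t)))
   ((2 * pi)^-1 * Rintegral (@lebesgue_measure R) circ
      (fun t => im (phi t) * cos (n%:~R * t)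
              - re (phi t) * sin (n%:~R * t))).

(* Toeplitz operator T_phi f = P_{H^2}(phi f), in Fourier coefficients:
   (T_phi f)(j) = sum_{k>=0} hat phi(j - k) hat f(k). *)
Definition toeplitz (phi : R -> R[i]) (f : nat -> R[i]) : nat -> R[i] :=
  fun j => csum (fun k => fourier phi (j%:Z - k%:Z) * f k).

(* M_z: multiplication by z = unilateral shift on Fourier coefficients *)
Definition Mz (f : nat -> R[i]) : nat -> R[i] :=
  fun n => if n is m.+1 then f m else 0.

Definition conjugation (C : (nat -> R[i]) -> (nat -> R[i])) : Prop :=
  (forall f, inH2 f -> inH2 (C f)) /\
  (forall (a : R[i]) f g, inH2 f -> inH2 g ->
      C (fun n => a * f n + g n) = (fun n => a^* * C f n + C g n)) /\
  (forall f, inH2 f -> C (C f) = f) /\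
  (forall f, inH2 f -> inner (C f) (C f) = inner f f).

Definition is_adjoint (A B : (nat -> R[i]) -> (nat -> R[i])) : Prop :=
  (forall f, inH2 f -> inH2 (B f)) /\
  (forall f g, inH2 f -> inH2 g -> inner (A f) g = inner f (B g)).

Definition C_symmetric (C T : (nat -> R[i]) -> (nat -> R[i])) : Prop :=
  exists Tstar, is_adjoint T Tstar /\
    forall f, inH2 f -> C (Tstar (C f)) = T f.

Definition S_toeplitz (S T : (nat -> R[i]) -> (nat -> R[i])) : Prop :=
  exists Sstar, is_adjoint S Sstar /\
    forall f, inH2 f -> Sstar (T (S f)) = T f.

End Hardy.

(* Main.v *)
Require Import Defs.
From mathcomp Require Import all_boot all_algebra.
From mathcomp Require Import all_classical all_reals all_analysis.
From mathcomp Require Import complex.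
From mathcomp Require Import ring lra.
Import GRing.Theory Num.Theory.
Import numFieldNormedType.Exports.
Local Open Scope ring_scope.
Local Open Scope classical_set_scope.
Section S.
Context {R : realType}.
Lemma shift_lim (s : nat -> R) : limn (fun n => s n.+1) = limn s.
Proof.
have E : ((fun n => s n.+1) @ \oo) = (s @ \oo).
  have H1 := @cvg_shiftS R s (s @ \oo).
  have H2 := @cvg_shiftS R s ((fun n => s n.+1) @ \oo).
  have A : (s @ \oo --> s @ \oo) by [].
  have B : ((fun n => s n.+1) @ \oo --> (fun n => s n.+1) @ \oo) by [].
  rewrite -H1 in A; rewrite H2 in B.
  apply/seteqP; split; [exact: B| exact: A].
by rewrite E.
Qed.

Lemma lim_comb (p q r : nat -> R) (k : R) : cvgn (series p) -> cvgn (series q) -> cvgn (series r) -> limn (series (fun n => k * (p n - q n - r n))) = k * (limn (series p) - limn (series q) - limn (series r)).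
Proof. move=> hp hq hr.
have -> : series (fun n => k * (p n - q n - r n)) = (fun n => k * (series p n - series q n - series r n)).
  by apply/funext=> n; rewrite /series /= -mulr_sumr !sumrB.
apply: cvg_lim => //.
apply: cvgMr. apply: cvgB; [apply: cvgB|]; assumption.
Qed.

Lemma series_single (v : nat -> R) j : (forall n, n != j -> v n = 0) -> forall n, (j < n)%N -> series v n = v j.
Proof.
move=> hv n hn.
have -> : n = (j.+1 + (n - j.+1))%N by rewrite subnKC.
elim: (n - j.+1)%N => [|m IH].
  rewrite addn0 seriesSr.
  have -> : series v j = 0.
    rewrite /series /= big_nat big1 // => k /andP[_ hk]; apply: hv; rewrite neq_ltn hk.
    done.
  by rewrite add0r.
have h : (j.+1 + m)%N != j by rewrite neq_ltn ltn_addr ?orbT.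
by rewrite addnS seriesSr IH (hv _ h) addr0.
Qed.

Lemma lim_single (v : nat -> R) j : (forall n, n != j -> v n = 0) -> limn (series v) = v j.
Proof.
move=> hv; apply: cvg_lim => //; apply: cvg_near_cst; near=> n; apply: series_single => //.
near: n; exists j.+1 => //.
Unshelve. all: by end_near.
Qed.

Lemma cvg_single (v : nat -> R) j : (forall n, n != j -> v n = 0) -> cvgn (series v).
Proof.
move=> hv; apply/cvg_ex; exists (v j); apply: cvg_near_cst; near=> n; apply: series_single => //.
near: n; exists j.+1 => //.
Unshelve. all: by end_near.
Qed.

Lemma re_id (z w : R[i]) : re (z * w^*) = 2^-1 * (cnormsq (1 * z + w) - cnormsq z - cnormsq w).
Proof. case: z => a b; case: w => c d. rewrite /cnormsq /re /im /=. by field. Qed.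
Lemma re_idC (z w : R[i]) : re (z * w^*) = 2^-1 * (cnormsq (1^* * z + w) - cnormsq z - cnormsq w).
Proof. case: z => a b; case: w => c d. rewrite /cnormsq /re /im /=. by field. Qed.
Lemma im_id (z w : R[i]) : im (z * w^*) = - 2^-1 * (cnormsq ((- 'i) * w + z) - cnormsq z - cnormsq w).
Proof. case: z => a b; case: w => c d. rewrite /cnormsq /re /im /=. by field. Qed.
Lemma im_idC (z w : R[i]) : im (z * w^*) = 2^-1 * (cnormsq ((- 'i)^* * w + z) - cnormsq z - cnormsq w).
Proof. case: z => a b; case: w => c d. rewrite /cnormsq /re /im /=. by field. Qed.
Lemma re_self (z : R[i]) : re (z * z^*) = cnormsq z.
Proof. case: z => a b. rewrite /cnormsq /re /im /=. ring. Qed.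
Lemma cnormsq_mul (a b : R[i]) : cnormsq (a * b) = cnormsq a * cnormsq b.
Proof. case: a => a1 a2; case: b => b1 b2. rewrite /cnormsq /re /im /=. ring. Qed.
Lemma cnormsq_ge0 (a : R[i]) : 0 <= cnormsq a.
Proof. case: a => a1 a2; rewrite /cnormsq /re /im /=. nra. Qed.
Lemma cnormsq_add (a b : R[i]) : cnormsq (a + b) <= 2 * cnormsq a + 2 * cnormsq b.
Proof. case: a => a1 a2; case: b => b1 b2. rewrite /cnormsq /re /im /=.
have h1 := sqr_ge0 (a1 - b1); have h2 := sqr_ge0 (a2 - b2). nra. Qed.
Lemma cnormsq0 : cnormsq (0 : R[i]) = 0.
Proof. rewrite /cnormsq /re /im /=. ring. Qed.

Lemma filter_shift (s : nat -> R) : ((fun n => s n.+1) @ \oo) = (s @ \oo).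
Proof.
have H1 := @cvg_shiftS R s (s @ \oo).
have H2 := @cvg_shiftS R s ((fun n => s n.+1) @ \oo).
have A : (s @ \oo --> s @ \oo) by [].
have B : ((fun n => s n.+1) @ \oo --> (fun n => s n.+1) @ \oo) by [].
rewrite -H1 in A; rewrite H2 in B.
apply/seteqP; split; [exact: B| exact: A].
Qed.

Lemma series_shift0 (w : nat -> R) : w 0%N = 0 -> series (fun n => w n.+1) = (fun n => series w n.+1).
Proof. by move=> h; apply/funext => n; rewrite /series /= big_nat_recl // h add0r. Qed.

Lemma csum_shift (u : nat -> R[i]) : u 0%N = 0 -> csum u = csum (fun n => u n.+1).
Proof.
move=> h; rewrite /csum; congr Complex.
  by rewrite (@series_shift0 (fun n => re (u n))) ?h // shift_lim.
by rewrite (@series_shift0 (fun n => im (u n))) ?h // shift_lim.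
Qed.

Lemma csum_single (u : nat -> R[i]) j : (forall n, n != j -> u n = 0) -> csum u = u j.
Proof.
move=> hu; rewrite /csum (@lim_single _ j) => [|n hn]; last by rewrite /= hu.
rewrite (@lim_single _ j) => [|n hn]; last by rewrite /= hu.
by case: (u j).
Qed.

Definition Mzs (f : nat -> R[i]) : nat -> R[i] := fun n => f n.+1.
Definition ej (j : nat) : nat -> R[i] := fun n => if n == j then 1 else 0.

Lemma inH2_Mz (f : nat -> R[i]) : inH2 f -> inH2 (Mz f).
Proof.
rewrite /inH2 => hf.
have E : series (fun n => cnormsq (f n)) = (fun n => series (fun n => cnormsq (Mz f n)) n.+1).
  by rewrite -series_shift0 //= cnormsq0.
by rewrite -(filter_shift (series (fun n => cnormsq (Mz f n)))) -E.
Qed.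

Lemma inH2_Mzs (f : nat -> R[i]) : inH2 f -> inH2 (Mzs f).
Proof.
rewrite /inH2 => hf.
have E : series (fun n => cnormsq (Mzs f n)) = (fun n => series (fun n => cnormsq (f n)) n.+1 - cnormsq (f 0%N)).
  by apply/funext => n; rewrite /series /= big_nat_recl // addrC addKr.

rewrite E; apply/cvg_ex; exists (limn (series (fun n => cnormsq (f n))) - cnormsq (f 0%N)).
apply: cvgB; last exact: cvg_cst.
by rewrite filter_shift.
Qed.

Lemma inH2_lin (a : R[i]) (f g : nat -> R[i]) : inH2 f -> inH2 g -> inH2 (fun n => a * f n + g n).
Proof.
rewrite /inH2 => hf hg.
apply: (@series_le_cvg R _ (fun n => 2 * cnormsq a * cnormsq (f n) + 2 * cnormsq (g n))).
- by move=> n; apply: cnormsq_ge0.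
- move=> n; have ha := cnormsq_ge0 a; have hf' := cnormsq_ge0 (f n); have hg' := cnormsq_ge0 (g n); nra.
- by move=> n; rewrite -mulrA -cnormsq_mul; apply: cnormsq_add.
have -> : series (fun n => 2 * cnormsq a * cnormsq (f n) + 2 * cnormsq (g n)) =
   (fun n => 2 * cnormsq a * series (fun n => cnormsq (f n)) n + 2 * series (fun n => cnormsq (g n)) n).
  by apply/funext => n; rewrite /series /= big_split /= -!mulr_sumr.
apply/cvg_ex; eexists; apply: cvgD; apply: cvgMr; eassumption.
Qed.

Lemma inH2_ej (j : nat) : inH2 (ej j).
Proof.
rewrite /inH2; apply: (@cvg_single _ j) => n hn.
by rewrite /ej (negbTE hn) cnormsq0.
Qed.

Lemma inner_ej (j : nat) (h : nat -> R[i]) : inner (ej j) h = (h j)^*.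
Proof.
rewrite /inner (@csum_single _ j) => [|n hn]; first by rewrite /ej eqxx mul1r.
by rewrite /ej (negbTE hn) mul0r.
Qed.

Lemma Mz_ej (j : nat) : Mz (ej j) = ej j.+1.
Proof. by apply/funext => -[|n]. Qed.

Lemma inner_shift (a b : nat -> R[i]) : inner a (Mz b) = inner (Mzs a) b.
Proof. by rewrite /inner csum_shift //= rmorph0 mulr0. Qed.

Lemma inner_shift' (a b : nat -> R[i]) : inner (Mz a) b = inner a (Mzs b).
Proof. by rewrite /inner csum_shift //= mul0r. Qed.

Lemma toeplitz_shift (phi : R -> R[i]) (h : nat -> R[i]) n : toeplitz phi (Mz h) n.+1 = toeplitz phi h n.
Proof.
rewrite /toeplitz csum_shift /=; last by rewrite mulr0.
congr csum; apply/funext => k; congr (fourier phi _ * _).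
by rewrite -addn1 -[(k.+1)%N]addn1 !PoszD opprD addrACA subrr addr0.
Qed.

Lemma re_Complex (a b : R) : re (Complex a b) = a.
Proof. by []. Qed.
Lemma im_Complex (a b : R) : im (Complex a b) = b.
Proof. by []. Qed.

Lemma conj_Complex (a b : R) : (Complex a b)^* = Complex a (-b).
Proof. by []. Qed.

Lemma re_inner_self (f : nat -> R[i]) : re (inner f f) = limn (series (fun n => cnormsq (f n))).
Proof.
rewrite /inner /csum re_Complex.
have -> : (fun n => re (f n * (f n)^*)) = (fun n => cnormsq (f n)) by apply/funext => n; exact: re_self.
by [].
Qed.

Lemma inner_C (C : (nat -> R[i]) -> (nat -> R[i])) (x y : nat -> R[i]) : conjugation C -> inH2 x -> inH2 y -> inner (C x) (C y) = (inner x y)^*.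
Proof.
case=> [hH [hlin [hinv hiso]]] hx hy.
pose hp := fun n => 1 * x n + y n.
pose hm := fun n => (- 'i) * y n + x n.
have Hp : inH2 hp by apply: inH2_lin.
have Hm : inH2 hm by apply: inH2_lin.
have Cp : C hp = fun n => 1^* * C x n + C y n by apply: hlin.
have Cm : C hm = fun n => (- 'i)^* * C y n + C x n by apply: hlin.
have N z : inH2 z -> limn (series (fun n => cnormsq (C z n))) = limn (series (fun n => cnormsq (z n))).
  by move=> hz; rewrite -!re_inner_self hiso.
have E1 : (fun n => re (C x n * (C y n)^*)) = (fun n => 2^-1 * (cnormsq (C hp n) - cnormsq (C x n) - cnormsq (C y n))).
  by apply/funext => n; rewrite Cp re_idC.
have E1' : (fun n => re (x n * (y n)^*)) = (fun n => 2^-1 * (cnormsq (hp n) - cnormsq (x n) - cnormsq (y n))).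
  by apply/funext => n; rewrite re_id.
have E2 : (fun n => im (C x n * (C y n)^*)) = (fun n => 2^-1 * (cnormsq (C hm n) - cnormsq (C x n) - cnormsq (C y n))).
  by apply/funext => n; rewrite Cm im_idC.
have E2' : (fun n => im (x n * (y n)^*)) = (fun n => - 2^-1 * (cnormsq (hm n) - cnormsq (x n) - cnormsq (y n))).
  by apply/funext => n; rewrite im_id.
have cx := hH _ hx; have cy := hH _ hy; have cp := hH _ Hp; have cm := hH _ Hm.
rewrite /inner /csum E1 E1' E2 E2' conj_Complex !lim_comb //.
by rewrite !N // mulNr opprK.
Qed.

End S.
Arguments inH2_Mz {R f}.
Arguments inH2_Mzs {R f}.

Theorem proposition4p5 (R : realType) (phi : R -> R[i])
    (C : (nat -> R[i]) -> (nat -> R[i])) :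
  Linfty phi -> conjugation C ->
  C_symmetric C (toeplitz phi) ->
  S_toeplitz (fun f => C (Mz (C f))) (toeplitz phi).
Proof.
move=> _ Cc [Ts [[TsH Tadj] csym]].
have [CH [Clin [Cinv Ciso]]] := Cc.
have key : forall g, inH2 g -> Mzs (Ts (Mz g)) = Ts g.
  move=> g hg; apply/funext => j.
  apply: (can_inj (@conjCK _)).
  rewrite /Mzs -!inner_ej.
  rewrite -(Tadj _ _ (inH2_ej j.+1) (inH2_Mz hg)) -(Tadj _ _ (inH2_ej j) hg) inner_shift.
  have -> : Mzs (toeplitz phi (ej j.+1)) = toeplitz phi (ej j).
    by apply/funext => n; rewrite /Mzs -Mz_ej toeplitz_shift.
  by [].
exists (fun g => C (Mzs (C g))); split.
  split.
    by move=> f hf; exact: (CH _ (inH2_Mzs (CH _ hf))).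
  move=> f g hf hg.
  have hCf := CH _ hf; have hCg := CH _ hg.
  transitivity (inner (C (Mz (C f))) (C (C g))); first by rewrite Cinv.
  rewrite (inner_C _ _ _ Cc (inH2_Mz hCf) hCg).
  transitivity (inner (C (C f)) (C (Mzs (C g)))); last by rewrite Cinv.
  by rewrite (inner_C _ _ _ Cc hCf (inH2_Mzs hCg)) inner_shift'.
move=> f hf.
have hCf := CH _ hf.
have hMz := inH2_Mz hCf.
have hS := CH _ hMz.
rewrite -(csym _ hS) (Cinv _ hMz) (Cinv _ (TsH _ hMz)) -(csym _ hf).
by rewrite key.
Qed.
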